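(* Let $\tau>0$, let $K\ge 1$ be an integer, and let $v_{max}>0$ and $u_b<0$ be constants. Consider a vehicle with speed bound $\overline v\in(0,v_{max}]$ and acceleration bounds $\underline u\le u_b<0<\overline u$, whose state evolves under the discrete dynamics described in the context. Assume $$K\tau\ \ge\ \frac{v_{max}}{|u_b|}+\tau .$$ Let $(s^0,v^0)$ with $v^0\in[0,\overline v]$ be an initial state and let $(u^k)_{0\le k<K}$ be an admissible control sequence, producing the admissible trajectory $(s^k,v^k)_{0\le k\le K}$. Then there exists an admissible control sequence $(\tilde u^k)_{0\le k\le K}$ with $\tilde u^0=u^0$ such that the corresponding trajectory $(\tilde s^k,\tilde v^k)_{0\le k\le K+1}$ starting from the same initial state $(\tilde s^0,\tilde v^0)=(s^0,v^0)$ satisfies $$\tilde v^K=\tilde v^{K+1}=0\qquad\text{and}\qquad \tilde s^{K+1}\le s^K .$$ (Equivalently, under the associated piecewise-constant acceleration in continuous time, the vehicle is at rest on the whole interval $[K\tau,(K+1)\tau]$ and its position at time $(K+1)\tau$ does not exceed the position of the original trajectory at time $K\tau$.)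
   Context: Time is discretized with step $\tau>0$; a vehicle applies a constant longitudinal acceleration $u^k$ on $[k\tau,(k+1)\tau)$. Its curvilinear position $s^k$ and longitudinal speed $v^k$ at time $k\tau$ obey $$v^{k+1}=v^k+u^k\tau,\qquad s^{k+1}=s^k+\tfrac12\,(v^k+v^{k+1})\,\tau ,$$ which are the exact double-integrator dynamics under piecewise-constant acceleration. A control sequence (and the resulting trajectory) is called admissible if for every index $k$ where it is defined, $u^k\in[\underline u,\overline u]$, and every resulting speed satisfies $v^k\in[0,\overline v]$ (speeds must be nonnegative and bounded by $\overline v$). *)

(* Defs.v *)
From Stdlib Require Import Reals Lra.
Open Scope R_scope.

Fixpoint vel (tau v0 : R) (u : nat -> R) (k : nat) : R :=
  match k with
  | O => v0
  | S k' => vel tau v0 u k' + u k' * tau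
  end.

Fixpoint posn (tau s0 v0 : R) (u : nat -> R) (k : nat) : R :=
  match k with
  | O => s0
  | S k' => posn tau s0 v0 u k'
            + / 2 * (vel tau v0 u k' + vel tau v0 u (S k')) * tau
  end.

Definition admissible (tau umin umax vbar v0 : R) (u : nat -> R) (N : nat) : Prop :=
  (forall k, (k < N)%nat -> umin <= u k <= umax) /\
  (forall k, (k <= N)%nat -> 0 <= vel tau v0 u k <= vbar).

(* Main.v *)
Require Import Defs.
From Stdlib Require Import Reals Lra Lia.
Open Scope R_scope.

Section Aux.
Variables (tau v0 ub : R) (u : nat -> R).

Fixpoint W (k : nat) : R :=
  match k with
  | O => v0
  | S O => v0 + u 0%nat * tau
  | S (S k' as k1) => Rmax 0 (Rmin (vel tau v0 u (S k1)) (W k1 + ub * tau))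
  end.

Definition ut (k : nat) : R := (W (S k) - W k) / tau.

Lemma vel_ut : 0 < tau -> forall k, vel tau v0 ut k = W k.
Proof.
  intros Ht k; induction k as [|k IH]; cbn [vel]; [reflexivity|].
  rewrite IH; unfold ut. set (a := W (S k)); set (b := W k). field; lra.
Qed.

Lemma W_SS k : W (S (S k)) = Rmax 0 (Rmin (vel tau v0 u (S (S k))) (W (S k) + ub * tau)).
Proof. reflexivity. Qed.

Lemma W1 : W 1 = v0 + u 0%nat * tau.
Proof. reflexivity. Qed.

Lemma W_ge0_SS k : 0 <= W (S (S k)).
Proof. rewrite W_SS; apply Rmax_l. Qed.

Lemma W_le_vel_SS k : W (S (S k)) <= Rmax 0 (vel tau v0 u (S (S k))).
Proof.
  rewrite W_SS. unfold Rmax, Rmin.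
  repeat destruct Rle_dec; lra.
Qed.

Lemma W_dec_SS k : 0 <= W (S k) -> ub < 0 -> 0 < tau -> W (S (S k)) <= W (S k).
Proof.
  intros H Hu Ht. assert (ub * tau < 0) by nra.
  rewrite W_SS. unfold Rmax, Rmin. repeat destruct Rle_dec; lra.
Qed.

Lemma W_bound_SS k : ub < 0 -> 0 < tau ->
  W (S (S k)) <= Rmax 0 (W (S k) + ub * tau).
Proof.
  intros Hu Ht. rewrite W_SS. unfold Rmax, Rmin. repeat destruct Rle_dec; lra.
Qed.

Lemma W_low_SS k umin : umin <= ub -> 0 < tau ->
  vel tau v0 u (S (S k)) >= W (S k) + umin * tau ->
  W (S (S k)) >= W (S k) + umin * tau.
Proof.
  intros Hu Ht H. assert (umin * tau <= ub * tau) by nra.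
  rewrite W_SS. unfold Rmax, Rmin. repeat destruct Rle_dec; lra.
Qed.

End Aux.

Theorem lemma1 (tau : R) (K : nat) (vmax ub vbar umin umax s0 v0 : R)
  (u : nat -> R) :
  0 < tau -> (1 <= K)%nat -> 0 < vmax -> ub < 0 ->
  0 < vbar -> vbar <= vmax ->
  umin <= ub -> 0 < umax ->
  INR K * tau >= vmax / Rabs ub + tau ->
  0 <= v0 <= vbar ->
  admissible tau umin umax vbar v0 u K ->
  exists ut : nat -> R,
    admissible tau umin umax vbar v0 ut (S K) /\
    ut 0%nat = u 0%nat /\
    vel tau v0 ut K = 0 /\ vel tau v0 ut (S K) = 0 /\
    posn tau s0 v0 ut (S K) <= posn tau s0 v0 u K.
Proof.
  intros Ht HK Hvm Hub Hvb Hvbm Humin Humax HKt Hv0 [Hctl Hvel].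
  set (w := W tau v0 ub u).
  assert (Hvu : forall k, vel tau v0 (ut tau v0 ub u) k = w k) by (apply vel_ut; lra).
  assert (Hu0 := Hctl 0%nat ltac:(lia)).
  assert (Hv1 := Hvel 1%nat HK). simpl in Hv1.
  assert (Hw1 : w 1%nat = v0 + u 0%nat * tau) by reflexivity.
  assert (Hw0 : w 0%nat = v0) by reflexivity.
  assert (Hge0 : forall k, 0 <= w k).
  { intros [|[|k]]; [lra| rewrite Hw1; lra | apply W_ge0_SS]. }
  assert (Hdec : forall k, w (S (S k)) <= w (S k)).
  { intros k; apply W_dec_SS; auto. }
  assert (Hle_vbar : forall k, w k <= vbar).
  { intros k; induction k as [|[|k] IH]; [lra| rewrite Hw1; lra|].
    specialize (Hdec k); lra. }
  assert (Hbd : forall k, w (S k) <= Rmax 0 (w 1%nat + INR k * ub * tau)).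
  { intros k; induction k as [|k IH].
    - simpl. rewrite Rmult_0_l, Rmult_0_l, Rplus_0_r. apply Rmax_r.
    - eapply Rle_trans; [apply W_bound_SS; auto|].
      fold w. rewrite S_INR. assert (ub*tau<0) by nra.
      revert IH. unfold Rmax. repeat destruct Rle_dec; nra. }
  assert (HwK : w K = 0).
  { destruct K as [|K']; [lia|]. specialize (Hbd K').
    assert (Hab : Rabs ub = - ub) by (apply Rabs_left; lra).
    rewrite Hab in HKt. rewrite S_INR in HKt.
    assert (INR K' * tau >= vmax / - ub) by lra.
    assert (INR K' * tau * (- ub) >= vmax).
    { apply Rle_ge. apply Rge_le in H.
      replace vmax with (vmax / - ub * - ub) by (field; lra).
      apply Rmult_le_compat_r; lra. }
    specialize (Hle_vbar 1%nat).
    assert (w 1%nat + INR K' * ub * tau <= 0) by nra.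
    specialize (Hge0 (S K')). revert Hbd. unfold Rmax. destruct Rle_dec; lra. }
  assert (HwSK : w (S K) = 0).
  { destruct K as [|K']; [lia|]. specialize (Hdec K'). specialize (Hge0 (S (S K'))). lra. }
  assert (Hlev : forall k, (k <= K)%nat -> w k <= vel tau v0 u k).
  { intros [|[|k]] Hk; [simpl; lra | rewrite Hw1; simpl; lra|].
    pose proof (W_le_vel_SS tau v0 ub u k). fold w in H.
    pose proof (Hvel (S (S k)) Hk). revert H. unfold Rmax. destruct Rle_dec; lra. }
  exists (ut tau v0 ub u). split; [split|].
  - intros k Hk. unfold ut. fold w.
    assert (Hlow : w (S k) - w k >= umin * tau).
    { destruct (Nat.eq_dec k K) as [->|Hne].
      - rewrite HwK, HwSK. nra.
      - destruct k as [|k].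
        + rewrite Hw1, Hw0. nra.
        + assert (Hk' : (S k < K)%nat) by lia.
          enough (w (S (S k)) >= w (S k) + umin * tau) by lra.
          apply (W_low_SS tau v0 ub u k umin); auto.
          fold w. change (vel tau v0 u (S (S k))) with (vel tau v0 u (S k) + u (S k) * tau).
          pose proof (Hlev (S k) ltac:(lia)). pose proof (Hctl (S k) Hk'). nra. }
    assert (Hup : w (S k) - w k <= umax * tau).
    { destruct k as [|k]; [rewrite Hw1, Hw0; nra|]. specialize (Hdec k). assert (0 < umax*tau) by nra. lra. }
    split.
    + apply (Rmult_le_reg_r tau); auto. unfold Rdiv. rewrite Rmult_assoc, Rinv_l; lra.
    + apply (Rmult_le_reg_r tau); auto. unfold Rdiv. rewrite Rmult_assoc, Rinv_l; lra.
  - intros k _. rewrite Hvu. split; auto.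
  - split; [unfold ut; fold w; rewrite Hw1, Hw0; field; lra|].
    rewrite !Hvu. split; [exact HwK|]. split; [exact HwSK|].
    cbn [posn]. rewrite !Hvu, HwK, HwSK.
    assert (forall k, (k <= K)%nat -> posn tau s0 v0 (ut tau v0 ub u) k <= posn tau s0 v0 u k).
    { induction k as [|k IH]; intros Hk; cbn [posn]; [lra|].
      rewrite !Hvu. pose proof (Hlev k ltac:(lia)). pose proof (Hlev (S k) Hk).
      specialize (IH ltac:(lia)). nra. }
    specialize (H K (le_n K)). lra.
Qed.
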